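(* Let $T\in\mathbb{P}(Sym^d(\mathbb{C}^{n+1}))$ and let $A\subset\mathbb{P}^n$ be a minimal decomposition of $T$. Assume that $\ell(A)\le d$ and that $A$ does not contain an aligned (i.e. collinear) subset of cardinality $d/2$. Then $T$ has rank $\ell(A)$ and $T$ is identifiable.
   Context: All spaces are complex projective; $\ell(A)$ is the cardinality of $A$. The Veronese map $\nu_d:\mathbb{P}^n\to\mathbb{P}(Sym^d(\mathbb{C}^{n+1}))$ sends $[L]$ ($L$ a linear form) to $[L^d]$. A finite set $A$ is a decomposition of $T$ if $T\in\langle\nu_d(A)\rangle$; it is minimal if no proper subset of $A$ is a decomposition of $T$. The rank of $T$ is the minimal cardinality of a decomposition. $T$ of rank $r$ is identifiable if it has only one decomposition of cardinality $r$, up to scaling and permutation of summands. *)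

(* Defs.v *)
From HB Require Import structures.
From mathcomp Require Import all_boot all_order all_algebra all_fingroup.
From mathcomp Require Import reals complex finmap.
Set Implicit Arguments. Unset Strict Implicit. Unset Printing Implicit Defensive.
Import Order.TTheory GRing.Theory Num.Theory.
Local Open Scope ring_scope.
Local Open Scope fset_scope.

Section Defs.
Variable R : realType.
Local Notation C := (R[i]).
Variables n d : nat.

(* vectors of C^{n+1}; a point of P^n is represented by a nonzero vector,
   i.e. (the coefficients of) a nonzero linear form L *)
Definition vec := 'rV[C]_(n.+1).

(* Sym^d(C^{n+1}) realised inside the tensor power (C^{n+1})^{(x)d}:
   tensors are functions of d-tuples of indices *)
Definition tensor := {ffun d.-tuple 'I_(n.+1) -> C}.

Definition is_symmetric (T : tensor) : Prop :=
  forall (t : d.-tuple 'I_(n.+1)) (s : 'S_d),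
    T [tuple tnth t (s i) | i < d] = T t.

Definition veronese (v : vec) : tensor :=
  [ffun t : d.-tuple 'I_(n.+1) => \prod_(i <- t) v ord0 i].

Definition point_set (A : {fset vec}) : Prop :=
  (forall v, v \in A -> v != 0) /\
  (forall v w, v \in A -> w \in A -> v != w -> forall c : C, v != c *: w).

Definition decomposition (T : tensor) (A : {fset vec}) : Prop :=
  point_set A /\
  exists c : vec -> C, T = \sum_(v <- A) c v *: veronese v.

Definition minimal_decomposition (T : tensor) (A : {fset vec}) : Prop :=
  decomposition T A /\ forall B, B `<` A -> ~ decomposition T B.

Definition has_rank (T : tensor) (r : nat) : Prop :=
  (exists A, decomposition T A /\ #|` A| = r) /\
  (forall B, decomposition T B -> (r <= #|` B|)%N).

Definition same_points (A B : {fset vec}) : Prop :=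
  (forall v, v \in A -> exists2 w, w \in B & exists c : C, v = c *: w) /\
  (forall w, w \in B -> exists2 v, v \in A & exists c : C, w = c *: v).

Definition identifiable (T : tensor) (r : nat) : Prop :=
  has_rank T r /\
  forall A B, decomposition T A -> #|` A| = r ->
              decomposition T B -> #|` B| = r -> same_points A B.

Definition aligned (S : {fset vec}) : Prop :=
  exists u w : vec, forall v, v \in S -> exists a b : C, v = (a *: u + b *: w)%R.

End Defs.

(* Main.v *)
Require Import Defs.
From HB Require Import structures.
From mathcomp Require Import all_boot all_order all_algebra all_fingroup.
From mathcomp Require Import reals complex finmap.
From Stdlib Require Import Classical.
From mathcomp Require Import zify.
Import Order.TTheory GRing.Theory Num.Theory.
Local Open Scope ring_scope.
Local Open Scope fset_scope.

Section Work.
Variable R : realType.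
Variable n : nat.
Local Notation C := (R[i]).
Local Notation V := (vec R n).
Local Notation form := 'cV[C]_(n.+1).

Definition ev (f : form) (v : V) : C := (v *m f) 0 0.

Lemma ev_sub (m : nat) (M : 'M[C]_(m, n.+1)) (f : form) (v : V) :
  M *m f = 0 -> (v <= M)%MS -> ev f v = 0.
Proof.
move=> Mf /submxP [D ->]; by rewrite /ev -mulmxA Mf mulmx0 mxE.
Qed.

Lemma sep (m : nat) (M : 'M[C]_(m, n.+1)) (x : V) :
  ~~ (x <= M)%MS -> exists f : form, M *m f = 0 /\ ev f x != 0.
Proof.
rewrite submxE => nz.
have [j Hj] : exists j, (x *m cokermx M) 0 j != 0.
  case: (boolP [exists j, (x *m cokermx M) 0 j != 0]) => [|H].
    by move/existsP.
  move/existsPn: H => H.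
  case/negP: nz; apply/eqP; apply: (iffLR (matrixP _ _)) => i k.
  move: (H k); rewrite negbK ord1 => /eqP ->; by rewrite mxE.
exists (col j (cokermx M)); split.
  by rewrite colE mulmxA mulmx_coker mul0mx.
by rewrite /ev colE mulmxA -colE mxE.
Qed.


Arguments sep {m M x}.
Arguments ev_sub {m M f v}.

Definition Fp (d : nat) (f : 'I_d -> form) (v : V) : C := \prod_(i < d) ev (f i) v.

Definition cons_form (d : nat) (h : form) (g : 'I_d -> form) : 'I_d.+1 -> form :=
  fun i => if unlift ord0 i is Some j then g j else h.

Arguments Fp {d}.
Arguments cons_form {d}.

Lemma Fp_cons d (h : form) (g : 'I_d -> form) v : Fp (cons_form h g) v = ev h v * Fp g v.
Proof.
rewrite /Fp big_ord_recl /cons_form unlift_none; congr (_ * _).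
by apply: eq_bigr => j _; rewrite liftK.
Qed.

Lemma sepl d (z : V) (s : seq V) : z != 0 -> (size s <= d)%N ->
  (forall p, p \in s -> ~~ (z <= p)%MS) ->
  exists f : 'I_d -> form, Fp f z != 0 /\ forall p, p \in s -> Fp f p = 0.
Proof.
move=> z0; elim: d s => [|d IH] s.
  case: s => // _ _; exists (fun _ => 0); split => //.
  by rewrite /Fp big_ord0 oner_neq0.
move=> hs Hs.
have Hp0 : ~~ (z <= head 0 s)%MS.
  case: s hs Hs => [|p0 s'] /= _ Hs.
    by apply: contra z0 => /sub_rVP [a ->]; rewrite scaler0.
  by apply: Hs; rewrite mem_head.
have [h [Hh1 Hh2]] := sep Hp0.
have [||g [Hg1 Hg2]] := IH (behead s).
- by case: s hs {Hs Hp0 Hh1} => //.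
- by move=> p Hp; apply: Hs; case: s Hp {hs Hp0 Hh1} => // a s' /= Hp; rewrite inE Hp orbT.
exists (cons_form h g); split; first by rewrite Fp_cons mulf_neq0.
move=> p; case: s hs Hs Hp0 Hh1 Hg2 => // p0 s' _ _ /= _ Hh1 Hg2; rewrite inE => /orP [/eqP ->|Hp].
  by rewrite Fp_cons /ev Hh1 mxE mul0r.
by rewrite Fp_cons Hg2 // mulr0.
Qed.


Definition pts (S : {fset V}) := (forall p, p \in S -> p != 0) /\
  (forall p q, p \in S -> q \in S -> p != q -> ~~ (p <= q)%MS).
Definition dep d (S : {fset V}) (c : V -> C) :=
  forall f : 'I_d -> form, \sum_(p <- S) c p * Fp f p = 0.
Definition colin (S : {fset V}) :=
  exists u w : V, forall p, p \in S -> (p <= col_mx u w)%MS.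

Lemma pts_sub S S' : S' `<=` S -> pts S -> pts S'.
Proof.
move=> /fsubsetP sub [H1 H2]; split=> [p Hp|p q Hp Hq]; first exact/H1/sub.
by apply: H2; apply: sub.
Qed.

Lemma small_contra d S c z : pts S -> z \in S -> (#|` S| <= d.+1)%N ->
  (forall p, p \in S -> c p != 0) -> dep d S c -> False.
Proof.
move=> [P1 P2] zS cardS cnz Hd.
have [|||f [Hf1 Hf2]] := @sepl d z (enum_fset (S `\ z)).
- exact: P1.
- by move: cardS; rewrite (cardfsD1 z) zS add1n ltnS.
- move=> p; rewrite in_fsetD1 => /andP [pz pS]; apply: P2 => //.
  by rewrite eq_sym.
move: (Hd f); rewrite (big_fsetD1 _ zS) big1_fset ?addr0.
  rewrite /= addr0 => /eqP; apply/negP; by rewrite mulf_neq0 // cnz.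
by move=> p Hp _; rewrite Hf2 ?mulr0.
Qed.

Lemma dep_res d S c (h : form) : dep d.+1 S c ->
  dep d [fset p in S | ev h p != 0] (fun p => c p * ev h p).
Proof.
move=> Hd g; move: (Hd (cons_form h g)).
rewrite (@big_fset_incl _ _ _ _ [fset p in S | ev h p != 0] S); last first.
- move=> x xS; rewrite !inE /= xS /= negbK => /eqP ->; by rewrite mulr0 mul0r.
- by apply/fsubsetP => x; rewrite !inE /= => /andP [].
move=> H; apply: etrans H; apply: eq_bigr => p _; by rewrite Fp_cons mulrA.
Qed.


Arguments small_contra {d S c z}.
Arguments pts_sub {S S'}.
Arguments dep_res {d S c}.

Lemma ev_col (u w : V) (h : form) : col_mx u w *m h = 0 -> ev h u = 0 /\ ev h w = 0.
Proof.
rewrite mul_col_mx => /eqP; rewrite col_mx_eq0 => /andP [/eqP Hu /eqP Hw].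
by rewrite /ev Hu Hw !mxE.
Qed.

Arguments ev_col {u w h}.

Lemma lem d : forall (S : {fset V}) (c : V -> C), pts S -> S != fset0 -> (#|` S| <= d + d + 1)%N ->
  (forall p, p \in S -> c p != 0) -> dep d S c -> colin S /\ (d.+2 <= #|` S|)%N.
Proof.
elim: d => [|d IH] S c PS S0 cardS cnz Hd; have [z zS] := fset0Pn _ S0.
  by exfalso; apply: (small_contra PS zS _ cnz Hd); lia.
case: (leqP #|` S| d.+2) => [small|big].
  by exfalso; apply: (small_contra PS zS small cnz Hd).
split => //.
case: (classic (colin S)) => // ncol; exfalso.
have [q qS] : exists q, q \in S `\ z.
  apply/fset0Pn; rewrite -cardfs_gt0; move: big; rewrite (cardfsD1 z) zS; lia.
have [r [rS rn]] : exists r, r \in S /\ ~~ (r <= col_mx z q)%MS.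
  apply: NNPP => H; apply: ncol; exists z, q => p pS.
  case: (boolP (p <= col_mx z q)%MS) => // Hn; exfalso; apply: H; by exists p.
have [h [Hh1 Hh2]] := sep rn.
have [hz hq] := ev_col Hh1.
set S' := [fset p in S | ev h p != 0].
have S'S : S' `<=` S by apply/fsubsetP => x; rewrite !inE /= => /andP [].
have [|||[u [w Huw]] card'] := IH S' (fun p => c p * ev h p) (pts_sub S'S PS) _ _ _ (dep_res h Hd).
- by apply/fset0Pn; exists r; rewrite !inE /= rS Hh2.
- have : S' `<=` S `\ z `\ q.
    apply/fsubsetP => x; rewrite !inE /= => /andP [xS hx].
    rewrite xS andbT; apply/andP; split; apply: contra hx => /eqP ->; by rewrite ?hz ?hq.
  move/fsubset_leq_card; move: (cardfsD1 z S) (cardfsD1 q (S `\ z)); rewrite zS qS.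
  move: cardS; lia.
- by move=> p; rewrite !inE /= => /andP [pS hp]; rewrite mulf_neq0 // cnz.
apply: ncol; exists u, w => x xS.
case: (boolP (x <= col_mx u w)%MS) => // xn; exfalso.
have [h' [Hh1' Hh2']] := sep xn.
set S'' := [fset p in S | ev h' p != 0].
have S''S : S'' `<=` S by apply/fsubsetP => y; rewrite !inE /= => /andP [].
have [|||_ card''] := IH S'' (fun p => c p * ev h' p) (pts_sub S''S PS) _ _ _ (dep_res h' Hd).
- by apply/fset0Pn; exists x; rewrite !inE /= xS Hh2'.
- have : S'' `<=` S `\` S'.
    apply/fsubsetP => y; rewrite !inE /= => /andP [yS hy].
    rewrite yS andbT; apply: contra hy => yS'.
    have yS2 : y \in S' by rewrite !inE /= yS; exact: yS'.
    by rewrite (ev_sub Hh1' (Huw y yS2)).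
  move/fsubset_leq_card; rewrite cardfsDS //; move: cardS card'; lia.
- by move=> p; rewrite !inE /= => /andP [pS hp]; rewrite mulf_neq0 // cnz.
have : S'' `<=` S `\` S'.
  apply/fsubsetP => y; rewrite !inE /= => /andP [yS hy].
  rewrite yS andbT; apply: contra hy => yS'.
  have yS2 : y \in S' by rewrite !inE /= yS; exact: yS'.
  by rewrite (ev_sub Hh1' (Huw y yS2)).
move/fsubset_leq_card; rewrite cardfsDS //; move: cardS card' card''; lia.
Qed.


Lemma ev_sum (f : form) (v : V) : ev f v = \sum_j v 0 j * f j 0.
Proof. by rewrite /ev mxE. Qed.

Definition Eval d (f : 'I_d -> form) (T : tensor R n d) : C :=
  \sum_(t : d.-tuple 'I_(n.+1)) T t * \prod_(i < d) f i (tnth t i) 0.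

Arguments Eval {d}.

Lemma Eval_ver d (f : 'I_d -> form) (v : V) : Eval f (veronese d v) = Fp f v.
Proof.
rewrite /Fp (eq_bigr (fun i => \sum_j v 0 j * f i j 0)); last by move=> i _; rewrite ev_sum.
rewrite bigA_distr_bigA /Eval /=.
rewrite (reindex (fun g : {ffun 'I_d -> 'I_(n.+1)} => [tuple g i | i < d])) /=; last first.
  exists (fun t : d.-tuple 'I_(n.+1) => [ffun i => tnth t i]) => g _.
    by apply/ffunP => i; rewrite ffunE tnth_mktuple.
  by apply: eq_from_tnth => i; rewrite tnth_mktuple ffunE.
apply: eq_bigr => g _; rewrite ffunE big_tuple -big_split /=.
by apply: eq_bigr => i _; rewrite !tnth_mktuple.
Qed.

Lemma Eval_dec d (f : 'I_d -> form) (A : {fset V}) (c : V -> C) :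
  Eval f (\sum_(v <- A) c v *: veronese d v) = \sum_(v <- A) c v * Fp f v.
Proof.
rewrite /Eval (eq_bigr (fun t => \sum_(v <- A) c v * veronese d v t * \prod_(i < d) f i (tnth t i) 0)); last first.
  move=> t _; rewrite sum_ffunE big_distrl /=; apply: eq_bigr => v _; by rewrite ffunE.
rewrite exchange_big /=; apply: eq_bigr => v _.
rewrite -Eval_ver /Eval big_distrr /=; apply: eq_bigr => t _; by rewrite mulrA.
Qed.


Lemma Fp_scale d (f : 'I_d -> form) (k : C) (v : V) : Fp f (k *: v) = k ^+ d * Fp f v.
Proof.
rewrite /Fp (eq_bigr (fun i => k * ev (f i) v)); last first.
  by move=> i _; rewrite /ev -scalemxAl mxE.
by rewrite big_split /= prodr_const card_ord.
Qed.

Definition lam (v w : V) : C :=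
  if [pick k | v 0 k != 0] is Some k then w 0 k / v 0 k else 0.

Lemma lamP (v w : V) : v != 0 -> (w <= v)%MS -> w = lam v w *: v.
Proof.
move=> v0 /sub_rVP [a ->]; rewrite /lam.
case: pickP => [k /= vk|H]; first by rewrite mxE mulfK.
exfalso; move/negP: v0; apply; apply/eqP/rowP => k.
by move: (H k) => /= /negbFE /eqP ->; rewrite mxE.
Qed.

Lemma prop_trans (w p1 p2 : V) : w != 0 -> (w <= p1)%MS -> (w <= p2)%MS -> (p1 <= p2)%MS.
Proof.
move=> w0 /sub_rVP [a Ha] /sub_rVP [b Hb].
have a0 : a != 0 by apply: contra w0 => /eqP a0; rewrite Ha a0 scale0r.
apply/sub_rVP; exists (a^-1 * b); rewrite -scalerA -Hb Ha scalerA mulVf //.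
by rewrite scale1r.
Qed.

Lemma uniq_prop X (w p1 p2 : V) : pts X -> w != 0 -> p1 \in X -> p2 \in X ->
  (w <= p1)%MS -> (w <= p2)%MS -> p1 = p2.
Proof.
move=> [_ PX] w0 h1 h2 s1 s2; apply/eqP; apply: contraT => ne.
by move: (PX _ _ h1 h2 ne); rewrite (@prop_trans w p1 p2 w0 s1 s2).
Qed.

Lemma sum_unique X (w : V) (F : V -> C) p0 : pts X -> w != 0 -> p0 \in X -> (w <= p0)%MS ->
  \sum_(p <- X | (w <= p)%MS) F p = F p0.
Proof.
move=> PX w0 h0 s0; rewrite big_mkcond (big_fsetD1 _ h0) /= s0 big1_fset ?addr0 //.
move=> p; rewrite in_fsetD1 => /andP [pp0 pX] _.
case: ifP => // sp; by rewrite (@uniq_prop X w p p0 PX w0 pX h0 sp s0) eqxx in pp0.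
Qed.


Arguments lem {d S c}.
Arguments prop_trans {w p1 p2}.
Arguments uniq_prop {X w p1 p2}.
Arguments lamP {v w}.
Arguments sum_unique {X w F p0}.

Lemma core d (A B : {fset V}) (a b : V -> C) :
  pts A -> pts B -> (forall v, v \in A -> a v != 0) -> (#|` B| <= #|` A|)%N ->
  (#|` A| <= d)%N ->
  (forall S, S `<=` A -> colin S -> (2 * #|` S| < d)%N) ->
  (forall f : 'I_d -> form, \sum_(v <- A) a v * Fp f v = \sum_(w <- B) b w * Fp f w) ->
  forall v0, v0 \in A -> exists2 w, w \in B & (w <= v0)%MS.
Proof.
move=> PA PB anz cardBA cardA Hal Hrel v0 v0A.
apply: NNPP => H0.
have H0' : forall w, w \in B -> ~~ (w <= v0)%MS.
  move=> w wB; apply/negP => s; apply: H0; by exists w.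
set B2 := [fset w in B | ~~ has (fun v => (w <= v)%MS) A].
set G := A `|` B2.
set c := fun p => (if p \in A then a p else 0) -
   \sum_(w <- B | (w <= p)%MS) b w * lam p w ^+ d.
have B2B : B2 `<=` B by apply/fsubsetP => x; rewrite !inE /= => /andP [].
have AG : A `<=` G by apply: fsubsetUl.
have B2G : B2 `<=` G by apply: fsubsetUr.
have PG : pts G.
  split.
  - move=> p; rewrite in_fsetU => /orP [pA|pB2]; first exact: PA.1.
    by apply: PB.1; apply: (fsubsetP B2B).
  - move=> p q; rewrite !in_fsetU => /orP [pA|pB2] /orP [qA|qB2] pq.
    + exact: PA.2.
    + apply/negP => s; move: qB2; rewrite !inE /= => /andP [qB /hasPn nh].
      by move: (nh p pA); rewrite (prop_trans (PA.1 p pA) s (submx_refl p)).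
    + move: pB2; rewrite !inE /= => /andP [pB /hasPn nh]; exact: nh q qA.
    + by apply: PB.2 => //; apply: (fsubsetP B2B).
have Hw : forall w, w \in B -> exists2 p, p \in G & (w <= p)%MS.
  move=> w wB; case: (boolP (has (fun v => (w <= v)%MS) A)) => [/hasP [v vA s]|nh].
    by exists v => //; apply: (fsubsetP AG).
  exists w; last exact: submx_refl.
  by apply: (fsubsetP B2G); rewrite !inE /= wB nh.
have relG : forall f : 'I_d -> form, \sum_(p <- G) c p * Fp f p = 0.
  move=> f; rewrite /c.
  under eq_bigr do rewrite mulrBl.
  rewrite sumrB.
  have -> : \sum_(p <- G) (if p \in A then a p else 0) * Fp f p =
            \sum_(v <- A) a v * Fp f v.
    transitivity (\sum_(v <- A) (if v \in A then a v else 0) * Fp f v).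
      by rewrite (big_fset_incl _ AG) // => x _ /negbTE ->; rewrite mul0r.
    by apply: eq_fbigr => v vA _; rewrite vA.
  have -> : \sum_(p <- G) (\sum_(w <- B | (w <= p)%MS) b w * lam p w ^+ d) * Fp f p =
            \sum_(w <- B) b w * Fp f w.
    transitivity (\sum_(p <- G) \sum_(w <- B) (if (w <= p)%MS then b w * Fp f w else 0)).
      apply: eq_fbigr => p pG _; rewrite big_distrl /= big_mkcond /=; apply: eq_bigr => w _.
      case: ifP => s //.
      by rewrite [in Fp f w](lamP (PG.1 p pG) s) Fp_scale mulrA.
    rewrite exchange_big /=; apply: eq_fbigr => w wB _.
    rewrite -big_mkcond /=; have [p pG s] := Hw w wB.
    exact: (sum_unique (F := fun _ => b w * Fp f w) PG (PB.1 w wB) pG s).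
  by rewrite Hrel subrr.
set S := [fset p in G | c p != 0].
have memS : forall x, (x \in S) = (x \in G) && (c x != 0) by move=> x; rewrite !inE.
have SG : S `<=` G by apply/fsubsetP => x; rewrite memS => /andP [].
have cv0 : c v0 = a v0.
  rewrite /c v0A big1_fset ?subr0 // => w wB s; by move: (H0' w wB); rewrite s.
have v0S : v0 \in S by rewrite !inE /= v0A /= cv0 anz.
have depS : dep d S c.
  move=> f; rewrite (big_fset_incl _ SG) ?relG // => x xG.
  by rewrite memS xG /= negbK => /eqP ->; rewrite mul0r.
have cardG : (#|` G| <= #|` A| + #|` B|)%N.
  rewrite /G cardfsU; have := fsubset_leq_card B2B; lia.
have [|||[u [w Huw]] cardS] := lem (pts_sub SG PG) _ _ _ depS.
- by apply/fset0Pn; exists v0.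
- have := fsubset_leq_card SG; lia.
- by move=> p; rewrite memS => /andP [].
set AL := [fset v in A | (v <= col_mx u w)%MS].
have ALA : AL `<=` A by apply/fsubsetP => x; rewrite !inE /= => /andP [].
have hAL : (2 * #|` AL| < d)%N.
  apply: Hal => //; exists u, w => p; by rewrite !inE /= => /andP [].
have SU : S `<=` AL `|` B2.
  apply/fsubsetP => p pS; have pG := fsubsetP SG p pS.
  rewrite in_fsetU; move: pG; rewrite in_fsetU => /orP [pA|pB2]; last by rewrite pB2 orbT.
  by apply/orP; left; rewrite !inE /= pA Huw.
set B1 := B `\` B2.
set psi := fun x => nth x [seq v <- A | (x <= v)%MS] 0.
have sub1 : A `\` AL `<=` [fset psi x | x in B1].
  apply/fsubsetP => v; rewrite in_fsetD => /andP [vAL vA].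
  have vG := fsubsetP AG v vA.
  have vS : v \notin S.
    apply: contra vAL => vS; rewrite !inE /= vA; exact: Huw.
  have cv : c v = 0 by move: vS; rewrite memS vG /= negbK => /eqP.
  have [x xB xv] : exists2 x, x \in B & (x <= v)%MS.
    apply: NNPP => Hn; have e : c v = a v.
      rewrite /c vA big1_fset ?subr0 // => x xB s; exfalso; apply: Hn; by exists x.
    by move: (anz v vA); rewrite -e cv eqxx.
  apply/imfsetP; exists x.
    rewrite /B1 in_fsetD xB andbT !inE /= xB /= negbK; apply/hasP; by exists v.
  rewrite /psi; set s := [seq v <- A | (x <= v)%MS].
  have sz : (0 < size s)%N.
    rewrite -has_predT; apply/hasP; exists v => //; by rewrite mem_filter xv vA.
  have := mem_nth x sz; rewrite mem_filter => /andP [s' yA].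
  exact: (uniq_prop PA (PB.1 x xB) vA yA xv s').
have card1 : (#|` A `\` AL| <= #|` B1|)%N.
  apply: leq_trans (fsubset_leq_card sub1) _; exact: leq_imfset_card.
move: card1; rewrite cardfsDS // /B1 cardfsDS // => card1.
have := fsubset_leq_card SU; rewrite cardfsU.
have := fsubset_leq_card ALA.
have := fsubset_leq_card B2B.
move: cardS hAL cardBA card1; lia.
Qed.


Lemma ps_pts (A : {fset V}) : point_set A -> pts A.
Proof.
move=> [H1 H2]; split => // p q pA qA pq; apply/negP => /sub_rVP [k e].
by move: (H2 p q pA qA pq k); rewrite e eqxx.
Qed.

Lemma ps_sub (A B : {fset V}) : B `<=` A -> point_set A -> point_set B.
Proof.
move=> /fsubsetP sub [H1 H2]; split => [p /sub|p q /sub pA /sub qA]; [exact: H1| exact: H2].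
Qed.

Lemma colin_aligned (u w p : V) : (p <= col_mx u w)%MS -> exists a b : C, p = (a *: u + b *: w)%R.
Proof.
move=> /submxP [D ->]; rewrite -[D]hsubmxK mul_row_col.
exists (lsubmx D 0 0), (rsubmx D 0 0).
by rewrite {1}[lsubmx D]mx11_scalar {1}[rsubmx D]mx11_scalar !mul_scalar_mx.
Qed.

Definition psi (B : {fset V}) (v : V) : V := nth v [seq w <- B | (w <= v)%MS] 0.

Lemma psiP (B : {fset V}) (v : V) : (exists2 w, w \in B & (w <= v)%MS) ->
  psi B v \in B /\ (psi B v <= v)%MS.
Proof.
move=> [w wB wv]; rewrite /psi; set s := [seq _ <- _ | _].
have sz : (0 < size s)%N.
  rewrite -has_predT; apply/hasP; exists w => //; by rewrite mem_filter wv wB.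
by have := mem_nth v sz; rewrite mem_filter => /andP [-> ->].
Qed.

End Work.

Arguments core {R n d A B a b}.
Arguments pts {R n}.
Arguments colin {R n}.
Arguments psi {R n}.
Arguments ps_pts {R n A}.
Arguments ps_sub {R n A B}.
Arguments colin_aligned {R n u w p}.
Arguments uniq_prop {R n X w p1 p2}.
Arguments Eval_dec {R n d}.
Arguments psiP {R n B v}.

Theorem mainTheorem4 (R : realType) (n d : nat)
  (T : tensor R n d) (A : {fset vec R n}) :
  is_symmetric T -> T != 0 ->
  minimal_decomposition T A ->
  (#|` A| <= d)%N ->
  (forall S : {fset vec R n}, S `<=` A -> aligned S -> ~ (d <= 2 * #|` S|)%N) ->
  has_rank T #|` A| /\ identifiable T #|` A|.
Proof.
move=> _ _ [[PSA [a Ta]] Amin] cardA Hal.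
have PA := ps_pts PSA.
have anz : forall v, v \in A -> a v != 0.
  move=> v vA; apply/negP => /eqP av; apply: (Amin (A `\ v)); first exact: fproperD1.
  split; first by apply: ps_sub PSA; apply: fsubD1set.
  exists a; rewrite Ta (big_fsetD1 _ vA) /= av scale0r add0r //.
have Hal' : forall S, S `<=` A -> colin S -> (2 * #|` S| < d)%N.
  move=> S SA [u [w Huw]]; rewrite ltnNge; apply/negP; apply: Hal => //.
  exists u, w => p pS; exact: colin_aligned (Huw p pS).
have key : forall B, decomposition T B -> (#|` B| <= #|` A|)%N ->
    forall v, v \in A -> exists2 w, w \in B & (w <= v)%MS.
  move=> B [PSB [b Tb]] cBA; apply: (core (b:=b) PA (ps_pts PSB) anz cBA cardA Hal').
  by move=> f; rewrite -(Eval_dec f A a) -(Eval_dec f B b) -Ta -Tb.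
have inj : forall B, decomposition T B -> (#|` B| <= #|` A|)%N ->
    #|` [fset psi B v | v in A]| = #|` A| /\ [fset psi B v | v in A] `<=` B.
  move=> B DB cBA; split.
    rewrite card_in_imfset //= => v1 v2 v1A v2A e.
    have [h1 s1] := psiP (key B DB cBA v1 v1A).
    have [h2 s2] := psiP (key B DB cBA v2 v2A).
    rewrite -e in s2.
    apply: (uniq_prop PA _ v1A v2A s1 s2).
    by apply: (DB.1.1); rewrite -/(psi B v1) h1.
  apply/fsubsetP => w /imfsetP [v vA ->].
  by have [] := psiP (key B DB cBA v vA).
have rk : has_rank T #|` A|.
  split; first by exists A; split => //; split => //; exists a.
  move=> B DB; rewrite leqNgt; apply/negP => lt.
  have [c1 c2] := inj B DB (ltnW lt).
  by move: (fsubset_leq_card c2); rewrite c1 leqNgt lt.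
split => //; split => // A1 B1 DA1 cA1 DB1 cB1.
have SP : forall X, decomposition T X -> #|` X| = #|` A| -> same_points A X.
  move=> X DX cX; have cXA : (#|` X| <= #|` A|)%N by rewrite cX.
  split.
    move=> v vA; have [w wX wv] := key X DX cXA v vA.
    exists w => //; move/sub_rVP: wv => [k e].
    have k0 : k != 0 by apply: contra (DX.1.1 w wX) => /eqP k0; rewrite e k0 scale0r.
    by exists k^-1; rewrite e scalerA mulVf // scale1r.
  move=> w wX; have [c1 c2] := inj X DX cXA.
  have eqX : [fset psi X v | v in A] = X.
    apply/eqP; rewrite eqEfcard c2 /= c1 cX //.
  move: wX; rewrite -eqX => /imfsetP [v vA ->].
  exists v => //; have [_ /sub_rVP [k e]] := psiP (key X DX cXA v vA).
  by exists k.
have [S1a S1b] := SP A1 DA1 cA1.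
have [S2a S2b] := SP B1 DB1 cB1.
split.
  move=> v vA1; have [u uA [k e]] := S1b v vA1.
  have [w wB [k' e']] := S2a u uA.
  exists w => //; exists (k * k'); by rewrite e e' scalerA.
move=> w wB1; have [u uA [k e]] := S2b w wB1.
have [v vA1 [k' e']] := S1a u uA.
exists v => //; exists (k * k'); by rewrite e e' scalerA.
Qed.
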